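(* Let $v,w\in\mathbb C\cong\mathbb R^2$ form a positively oriented basis, let $\vartheta\in(0,\pi)$ be the angle from $v$ to $w$, and let $H:S^1\to S^1$ be the holonomy obtained by moving the tracer point of a Prytz planimeter of length $\ell$ around the parallelogram with successive vertices $0,v,v+w,w,0$ (base point $0$). Then $H$ is the restriction to $S^1$ of $z\mapsto\frac{\alpha z+\beta}{\bar\beta z+\bar\alpha}$ for a matrix $\begin{pmatrix}\alpha&\beta\\ \bar\beta&\bar\alpha\end{pmatrix}\in SU(1,1)$ with trace $$2-4\,s^2,\qquad s=\sinh\!\Big(\frac{|v|}{2\ell}\Big)\sinh\!\Big(\frac{|w|}{2\ell}\Big)\sin\vartheta.$$ Consequently, if $s>1$ then $H$ has exactly two fixed points on $S^1$, one attracting and one repelling; if $s<1$ then $H$ has no fixed points on $S^1$. *)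

(* Defs.v *)
From Stdlib Require Import Reals.
From Coquelicot Require Import Coquelicot.
Open Scope R_scope.

Definition on_circle (z : C) : Prop := Cmod z = 1.

(* Prytz planimeter of length l: tracer point P(t), chisel Q = P + l*z with
   z in S^1 the direction of the rod.  The no-slip condition (Q' parallel to z)
   gives the Riccati equation  z' = (z^2 * conj(P') - P') / (2 l).
   Along a straight segment with constant velocity P' = u this is: *)
Definition prytz_field (l : R) (u z : C) : C :=
  Cmult (RtoC (/ (2 * l))) (Cminus (Cmult (Cmult z z) (Cconj u)) u).

Definition prytz_segment (l : R) (u a b : C) : Prop :=
  exists z : R -> C, z 0 = a /\ z 1 = b /\
    forall t : R, is_derive z t (prytz_field l u (z t)).

Definition prytz_holonomy (l : R) (v w z0 z4 : C) : Prop :=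
  exists z1 z2 z3 : C,
    prytz_segment l v z0 z1 /\ prytz_segment l w z1 z2 /\
    prytz_segment l (Copp v) z2 z3 /\ prytz_segment l (Copp w) z3 z4.

Definition mobius (alpha beta z : C) : C :=
  Cdiv (Cplus (Cmult alpha z) beta) (Cplus (Cmult (Cconj beta) z) (Cconj alpha)).

Definition attracting_on_circle (f : C -> C) (p : C) : Prop :=
  on_circle p /\ f p = p /\
  exists eps : R, 0 < eps /\
    forall x : C, on_circle x -> Cmod (Cminus x p) < eps ->
      is_lim_seq (fun n : nat => Cmod (Cminus (Nat.iter n f x) p)) 0.

Definition repelling_on_circle (f : C -> C) (p : C) : Prop :=
  on_circle p /\ f p = p /\
  exists eps : R, 0 < eps /\
    forall x : C, on_circle x -> 0 < Cmod (Cminus x p) < eps ->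
      exists n : nat, eps <= Cmod (Cminus (Nat.iter n f x) p).

(* Main.v *)
Require Import Defs.
From Stdlib Require Import Reals Lra Nsatz.
From Coquelicot Require Import Coquelicot.
Open Scope R_scope.

Definition su (a b : C) : Prop := Cmod a ^ 2 - Cmod b ^ 2 = 1.

Lemma Cmod_sq z : Cmod z ^ 2 = fst z * fst z + snd z * snd z.
Proof. rewrite Cmod2_alt. unfold Re, Im. ring. Qed.

Lemma circle_iff z : on_circle z <-> fst z * fst z + snd z * snd z = 1.
Proof.
  unfold on_circle. split; intro H.
  - rewrite <- Cmod_sq, H. ring.
  - unfold Cmod. replace (fst z ^ 2 + snd z ^ 2) with 1 by (rewrite <- H; ring). apply sqrt_1.
Qed.

Lemma su_iff a b : su a b <-> (fst a * fst a + snd a * snd a) - (fst b * fst b + snd b * snd b) = 1.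
Proof. unfold su. rewrite !Cmod_sq. tauto. Qed.

Lemma C_eq (x y : C) : fst x = fst y -> snd x = snd y -> x = y.
Proof. destruct x, y; simpl; intros; subst; reflexivity. Qed.

Definition den (a b z : C) : C := Cplus (Cmult (Cconj b) z) (Cconj a).

Lemma den_nz a b z : su a b -> on_circle z -> den a b z <> RtoC 0.
Proof.
  rewrite su_iff, circle_iff. destruct a as [a1 a2], b as [b1 b2], z as [z1 z2].
  unfold den, Cplus, Cmult, Cconj, RtoC; simpl. intros Hs Hz E.
  injection E as E1 E2.
  assert (a1 = - (b1 * z1 - - b2 * z2)) by lra.
  assert (a2 = b1 * z2 + - b2 * z1) by lra. subst a1 a2.
  assert (F : (- (b1 * z1 - - b2 * z2) * - (b1 * z1 - - b2 * z2) + (b1 * z2 + - b2 * z1) * (b1 * z2 + - b2 * z1) -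
    (b1 * b1 + b2 * b2)) = (b1*b1+b2*b2) * (z1*z1+z2*z2 - 1)) by ring.
  rewrite Hz in F. lra.
Qed.

Lemma mobius_eq a b z : mobius a b z = Cdiv (Cplus (Cmult a z) b) (den a b z).
Proof. reflexivity. Qed.

Lemma Cmod_eq_sq (x y : C) : fst x * fst x + snd x * snd x = fst y * fst y + snd y * snd y -> Cmod x = Cmod y.
Proof. intros H. unfold Cmod. f_equal. simpl. rewrite !Rmult_1_r. exact H. Qed.

Lemma mob_circle a b z : su a b -> on_circle z -> on_circle (mobius a b z).
Proof.
  intros Hs Hz. pose proof (den_nz _ _ _ Hs Hz) as HD.
  unfold on_circle. rewrite mobius_eq, Cmod_div by exact HD.
  assert (E : Cmod (Cplus (Cmult a z) b) = Cmod (den a b z)).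
  { apply Cmod_eq_sq. rewrite su_iff in Hs. rewrite circle_iff in Hz.
    destruct a as [a1 a2], b as [b1 b2], z as [z1 z2]. unfold den, Cplus, Cmult, Cconj; simpl in *.
    nsatz. }
  rewrite E. field. intro H0. apply HD. apply Cmod_eq_0. exact H0.
Qed.

Definition mm (M1 M2 : C * C) : C * C :=
  (Cplus (Cmult (fst M1) (fst M2)) (Cmult (snd M1) (Cconj (snd M2))),
   Cplus (Cmult (fst M1) (snd M2)) (Cmult (snd M1) (Cconj (fst M2)))).

Definition suM (M : C * C) := su (fst M) (snd M).
Definition mobM (M : C * C) := mobius (fst M) (snd M).

Lemma su_mm M1 M2 : suM M1 -> suM M2 -> suM (mm M1 M2).
Proof.
  unfold suM. rewrite !su_iff. destruct M1 as [[a1 a2] [b1 b2]], M2 as [[c1 c2] [d1 d2]].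
  unfold mm, Cplus, Cmult, Cconj; simpl. intros H1 H2. nsatz.
Qed.

Lemma mob_comp M1 M2 z : suM M1 -> suM M2 -> on_circle z ->
  mobM M1 (mobM M2 z) = mobM (mm M1 M2) z.
Proof.
  intros H1 H2 Hz. unfold suM, mobM in *.
  pose proof (den_nz _ _ _ H2 Hz) as D2.
  pose proof (mob_circle _ _ _ H2 Hz) as Hw.
  pose proof (den_nz _ _ _ H1 Hw) as D1.
  destruct M1 as [a1 b1], M2 as [a2 b2]. simpl in *.
  rewrite mobius_eq in *. unfold mm; simpl. unfold mobius.
  rewrite !Cplus_conj, !Cmult_conj, !Cconj_conj.
  unfold den in *.
  set (w := Cdiv (Cplus (Cmult a2 z) b2) (Cplus (Cmult (Cconj b2) z) (Cconj a2))) in *.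
  assert (E : Cplus (Cmult (Cplus (Cmult (Cconj a1) (Cconj b2)) (Cmult (Cconj b1) a2)) z)
                 (Cplus (Cmult (Cconj a1) (Cconj a2)) (Cmult (Cconj b1) b2))
              = Cmult (Cplus (Cmult (Cconj b1) w) (Cconj a1)) (Cplus (Cmult (Cconj b2) z) (Cconj a2))).
  { unfold w. field. exact D2. }
  assert (E2 : Cplus (Cmult (Cconj b1) w) (Cconj a1) =
     Cdiv (Cplus (Cmult (Cconj b1) (Cplus (Cmult a2 z) b2)) (Cmult (Cconj a1) (Cplus (Cmult (Cconj b2) z) (Cconj a2))))
          (Cplus (Cmult (Cconj b2) z) (Cconj a2))).
  { unfold w. field. exact D2. }
  rewrite E. unfold w. field. split. exact D2.
  intro H0. apply D1. rewrite E2. fold w. rewrite H0. unfold Cdiv. ring.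
Qed.

Lemma su_C a b : su a b -> Cminus (Cmult a (Cconj a)) (Cmult b (Cconj b)) = RtoC 1.
Proof.
  rewrite su_iff. destruct a as [a1 a2], b as [b1 b2]; simpl. intros H.
  apply C_eq; unfold Cminus, Cplus, Copp, Cmult, Cconj, RtoC; simpl; nsatz.
Qed.

Lemma mob_diff a b z w : su a b -> on_circle z -> on_circle w ->
  Cminus (mobius a b z) (mobius a b w) = Cdiv (Cminus z w) (Cmult (den a b z) (den a b w)).
Proof.
  intros Hs Hz Hw. pose proof (den_nz _ _ _ Hs Hz) as Dz. pose proof (den_nz _ _ _ Hs Hw) as Dw.
  assert (E : Cminus z w = Cminus (Cmult (Cplus (Cmult a z) b) (den a b w)) (Cmult (Cplus (Cmult a w) b) (den a b z))).
  { transitivity (Cmult (Cminus (Cmult a (Cconj a)) (Cmult b (Cconj b))) (Cminus z w)).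
    - rewrite (su_C _ _ Hs). ring.
    - unfold den. ring. }
  rewrite E, !mobius_eq. field. split; assumption.
Qed.

Lemma fix_iff a b x : su a b -> on_circle x ->
  (mobius a b x = x <-> snd (Cmult (Cconj b) x) = snd a).
Proof.
  intros Hs Hx. pose proof (den_nz _ _ _ Hs Hx) as Dx.
  rewrite mobius_eq. split; intro H.
  - assert (E : Cplus (Cmult a x) b = Cmult x (den a b x)).
    { rewrite <- H at 2. field. exact Dx. }
    clear H Dx. rewrite su_iff in Hs. rewrite circle_iff in Hx.
    destruct a as [a1 a2], b as [b1 b2], x as [x1 x2]. unfold den, Cplus, Cmult, Cconj in *; simpl in *.
    injection E as E1 E2. nsatz.
  - assert (E : Cplus (Cmult a x) b = Cmult x (den a b x)).
    { rewrite su_iff in Hs. rewrite circle_iff in Hx.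
      destruct a as [a1 a2], b as [b1 b2], x as [x1 x2]. unfold den, Cplus, Cmult, Cconj in *; simpl in *.
      apply C_eq; simpl; nsatz. }
    rewrite E. field. exact Dx.
Qed.

Lemma no_fix a b x : su a b -> fst a * fst a < 1 -> on_circle x -> mobius a b x <> x.
Proof.
  intros Hs Ha Hx H. rewrite (fix_iff _ _ _ Hs Hx) in H.
  rewrite su_iff in Hs. rewrite circle_iff in Hx.
  destruct a as [a1 a2], b as [b1 b2], x as [x1 x2]. unfold Cmult, Cconj in *; simpl in *.
  set (w1 := b1 * x1 + b2 * x2).
  assert (E : w1 * w1 + a2 * a2 = (b1*b1+b2*b2) * (x1*x1+x2*x2)).
  { rewrite <- H. unfold w1. ring. }
  rewrite Hx in E. nra.
Qed.

Lemma Cmod_minus_le2 x y : on_circle x -> on_circle y -> Cmod (Cminus x y) <= 2.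
Proof.
  unfold on_circle. intros Hx Hy. unfold Cminus.
  eapply Rle_trans. apply Cmod_triangle. rewrite Cmod_opp. lra.
Qed.

Lemma Cmod_minus_sym x y : Cmod (Cminus x y) = Cmod (Cminus y x).
Proof.
  replace (Cminus y x) with (Copp (Cminus x y)) by ring. rewrite Cmod_opp. reflexivity.
Qed.

Lemma Cmod_minus_tri x y z : Cmod (Cminus x z) <= Cmod (Cminus x y) + Cmod (Cminus y z).
Proof.
  replace (Cminus x z) with (Cplus (Cminus x y) (Cminus y z)) by ring. apply Cmod_triangle.
Qed.

Lemma Cminus_nz x y : x <> y -> 0 < Cmod (Cminus x y).
Proof.
  intros H. apply Cmod_gt_0. intro E. apply H.
  replace x with (Cplus (Cminus x y) y) by ring. rewrite E. ring.
Qed.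



Lemma step_norm (a b : C) (Hs : su a b) z r (lr : R) : on_circle z -> on_circle r -> mobius a b r = r -> den a b r = RtoC lr ->
  Cmod (Cminus ((mobius a b) z) r) = Cmod (Cminus z r) / (Cmod (den a b z) * Rabs lr).
Proof.
  intros Hz Hr Fr Lr. replace (Cminus (mobius a b z) r) with (Cminus (mobius a b z) (mobius a b r)) by (rewrite Fr; reflexivity).
  rewrite (mob_diff _ _ _ _ Hs Hz Hr). rewrite Lr.
  rewrite Cmod_div. rewrite Cmod_mult, Cmod_R. reflexivity.
  rewrite <- Lr. intro E. apply (f_equal Cmod) in E.
  rewrite Cmod_mult, Cmod_0 in E. apply Rmult_integral in E.
  destruct E as [E|E]; apply Cmod_eq_0 in E; revert E; apply den_nz; auto.
Qed.

Lemma iter_circle (a b : C) (Hs : su a b) z n : on_circle z -> on_circle (Nat.iter n (mobius a b) z).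
Proof.
  intros Hz. induction n; simpl; auto. apply mob_circle; auto.
Qed.

Lemma iter_id (a b p q : C) (lp lq : R) (Hs : su a b) (Hp : on_circle p) (Hq : on_circle q) (Fp : mobius a b p = p) (Fq : mobius a b q = q) (Lp : den a b p = RtoC lp) (Lq : den a b q = RtoC lq) (Lq0 : 0 < Rabs lq) (Lqp : Rabs lq < Rabs lp) (Hpq : p <> q) z n : on_circle z ->
  Cmod (Cminus (Nat.iter n (mobius a b) z) p) * Rabs lp ^ n * Cmod (Cminus z q) =
  Rabs lq ^ n * Cmod (Cminus (Nat.iter n (mobius a b) z) q) * Cmod (Cminus z p).
Proof.
  intros Hz. induction n.
  - simpl. ring.
  - pose proof (iter_circle a b Hs z n Hz) as Hg.
    set (g := Nat.iter n (mobius a b) z) in *.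
    change (Nat.iter (S n) (mobius a b) z) with ((mobius a b) g).
    rewrite (step_norm a b Hs g p lp Hg Hp Fp Lp), (step_norm a b Hs g q lq Hg Hq Fq Lq).
    assert (HD : 0 < Cmod (den a b g)) by (apply Cmod_gt_0; apply den_nz; auto).
    assert (Hlp : 0 < Rabs lp) by lra.
    simpl. field_simplify_eq; [| split; lra].
    replace (Cmod (Cminus g p) * Rabs lp * Rabs lp ^ n * Cmod (Cminus z q) * Rabs lq)
      with (Rabs lp * Rabs lq * (Cmod (Cminus g p) * Rabs lp ^ n * Cmod (Cminus z q))) by ring.
    rewrite IHn. ring.
Qed.

Lemma conv (a b p q : C) (lp lq : R) (Hs : su a b) (Hp : on_circle p) (Hq : on_circle q) (Fp : mobius a b p = p) (Fq : mobius a b q = q) (Lp : den a b p = RtoC lp) (Lq : den a b q = RtoC lq) (Lq0 : 0 < Rabs lq) (Lqp : Rabs lq < Rabs lp) (Hpq : p <> q) z : on_circle z -> z <> q ->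
  is_lim_seq (fun n => Cmod (Cminus (Nat.iter n (mobius a b) z) p)) 0.
Proof.
  intros Hz Hzq.
  assert (Hlp : 0 < Rabs lp) by lra.
  pose proof (Cminus_nz _ _ Hzq) as Hzq'.
  set (K := 2 * (Cmod (Cminus z p) / Cmod (Cminus z q))).
  set (rho := Rabs lq / Rabs lp).
  apply is_lim_seq_le_le with (u := fun _ => 0) (w := fun n => K * rho ^ n).
  - intros n. split. apply Cmod_ge_0.
    pose proof (iter_id a b p q lp lq Hs Hp Hq Fp Fq Lp Lq Lq0 Lqp Hpq z n Hz) as E.
    pose proof (Cmod_minus_le2 _ _ (iter_circle a b Hs z n Hz) Hq) as B.
    set (g := Nat.iter n (mobius a b) z) in *.
    assert (Hpn : 0 < Rabs lp ^ n) by (apply pow_lt; lra).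
    assert (Eg : Cmod (Cminus g p) = rho ^ n * Cmod (Cminus g q) * (Cmod (Cminus z p) / Cmod (Cminus z q))).
    { unfold rho, Rdiv. rewrite Rpow_mult_distr, pow_inv.
      apply (Rmult_eq_reg_r (Rabs lp ^ n * Cmod (Cminus z q))); [| nra].
      rewrite <- Rmult_assoc, E. field. split; lra. }
    rewrite Eg. unfold K.
    assert (0 <= rho ^ n) by (apply pow_le; unfold rho; apply Rle_mult_inv_pos; [apply Rabs_pos | lra]).
    assert (0 <= Cmod (Cminus z p) / Cmod (Cminus z q)) by (apply Rle_mult_inv_pos; [apply Cmod_ge_0 | lra]).
    assert (0 <= rho ^ n * (Cmod (Cminus z p) / Cmod (Cminus z q))) by (apply Rmult_le_pos; auto).
    nra.
  - apply is_lim_seq_const.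
  - replace (Finite 0) with (Rbar_mult K 0) by (simpl; f_equal; ring).
    apply is_lim_seq_scal_l. apply is_lim_seq_geom.
    unfold rho. rewrite Rabs_pos_eq. apply (Rmult_lt_reg_r (Rabs lp)); auto.
    field_simplify; lra.
    apply Rle_mult_inv_pos; [apply Rabs_pos | lra].
Qed.

Lemma attr (a b p q : C) (lp lq : R) (Hs : su a b) (Hp : on_circle p) (Hq : on_circle q) (Fp : mobius a b p = p) (Fq : mobius a b q = q) (Lp : den a b p = RtoC lp) (Lq : den a b q = RtoC lq) (Lq0 : 0 < Rabs lq) (Lqp : Rabs lq < Rabs lp) (Hpq : p <> q) : attracting_on_circle (mobius a b) p.
Proof.
  split; [exact Hp | split; [exact Fp |]].
  exists (Cmod (Cminus p q)). split. apply Cminus_nz; auto.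
  intros x Hx Hxp. apply (conv a b p q lp lq Hs Hp Hq Fp Fq Lp Lq Lq0 Lqp Hpq); auto. intro E. subst x.
  rewrite Cmod_minus_sym in Hxp. lra.
Qed.

Lemma repel (a b p q : C) (lp lq : R) (Hs : su a b) (Hp : on_circle p) (Hq : on_circle q) (Fp : mobius a b p = p) (Fq : mobius a b q = q) (Lp : den a b p = RtoC lp) (Lq : den a b q = RtoC lq) (Lq0 : 0 < Rabs lq) (Lqp : Rabs lq < Rabs lp) (Hpq : p <> q) : repelling_on_circle (mobius a b) q.
Proof.
  split; [exact Hq | split; [exact Fq |]].
  pose proof (Cminus_nz _ _ Hpq) as Hpq'.
  exists (Cmod (Cminus p q) / 2). split. lra.
  intros x Hx [Hx0 Hxe].
  assert (Hxq : x <> q) by (intro E; subst; replace (Cminus q q) with (RtoC 0) in Hx0 by ring; rewrite Cmod_0 in Hx0; lra).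
  pose proof (conv a b p q lp lq Hs Hp Hq Fp Fq Lp Lq Lq0 Lqp Hpq x Hx Hxq) as L. apply is_lim_seq_spec in L.
  assert (He : 0 < Cmod (Cminus p q) / 2) by lra.
  destruct (L (mkposreal _ He)) as [N HN]. exists N.
  specialize (HN N (le_n N)). simpl in HN. rewrite Rminus_0_r, Rabs_pos_eq in HN by apply Cmod_ge_0.
  pose proof (Cmod_minus_tri p (Nat.iter N (mobius a b) x) q) as T.
  rewrite (Cmod_minus_sym p (Nat.iter N (mobius a b) x)) in T. lra.
Qed.



Lemma hyper a b : su a b -> fst a < -1 -> exists p q : C, p <> q /\
  (forall x, on_circle x -> (mobius a b x = x <-> x = p \/ x = q)) /\
  attracting_on_circle (mobius a b) p /\ repelling_on_circle (mobius a b) q.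
Proof.
  intros Hs Ha.
  pose proof Hs as Hs'. rewrite su_iff in Hs'.
  destruct a as [a1 a2], b as [b1 b2]. simpl in Ha, Hs'.
  set (nb := b1 * b1 + b2 * b2).
  assert (Hnb : 0 < nb) by (unfold nb; nra).
  set (d := sqrt (a1 * a1 - 1)).
  assert (Hd2 : d * d = a1 * a1 - 1) by (unfold d; apply sqrt_sqrt; nra).
  assert (Hd : 0 < d) by (unfold d; apply sqrt_lt_R0; nra).
  set (mk := fun w1 w2 : R => (((b1 * w1 - b2 * w2) / nb), ((b1 * w2 + b2 * w1) / nb)) : C).
  assert (Cmk : forall w1 w2, Cmult (Cconj (b1, b2)) (mk w1 w2) = (w1, w2)).
  { intros w1 w2. unfold mk, Cmult, Cconj; simpl. apply C_eq; simpl; field_simplify_eq; try lra; unfold nb; ring. }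
  assert (Circ : forall w1, w1 * w1 = d * d -> on_circle (mk w1 a2)).
  { intros w1 Hw. apply circle_iff. unfold mk; simpl.
    assert (Hnb0 : b1 * b1 + b2 * b2 <> 0) by (fold nb; lra).
    replace ((b1 * w1 - b2 * a2) / nb * ((b1 * w1 - b2 * a2) / nb) + (b1 * a2 + b2 * w1) / nb * ((b1 * a2 + b2 * w1) / nb))
      with (nb * (w1 * w1 + a2 * a2) / (nb * nb)) by (unfold nb; field; exact Hnb0).
    rewrite Hw, Hd2. replace (a1 * a1 - 1 + a2 * a2) with nb by (unfold nb; lra). field. lra. }
  set (p := mk (-d) a2). set (q := mk d a2).
  assert (Hp : on_circle p) by (apply Circ; ring).
  assert (Hq : on_circle q) by (apply Circ; ring).
  assert (Fp : mobius (a1,a2) (b1,b2) p = p).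
  { apply fix_iff; auto. unfold p. rewrite Cmk. reflexivity. }
  assert (Fq : mobius (a1,a2) (b1,b2) q = q).
  { apply fix_iff; auto. unfold q. rewrite Cmk. reflexivity. }
  assert (Hpq : p <> q).
  { intro E. assert (E2 : Cmult (Cconj (b1,b2)) p = Cmult (Cconj (b1,b2)) q) by (rewrite E; reflexivity).
    unfold p, q in E2. rewrite !Cmk in E2. injection E2. lra. }
  assert (Lp : den (a1,a2) (b1,b2) p = RtoC (a1 - d)).
  { unfold den, p. rewrite Cmk. unfold Cconj, Cplus, RtoC; simpl. apply C_eq; simpl; ring. }
  assert (Lq : den (a1,a2) (b1,b2) q = RtoC (a1 + d)).
  { unfold den, q. rewrite Cmk. unfold Cconj, Cplus, RtoC; simpl. apply C_eq; simpl; ring. }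
  assert (Hdl : d < - a1).
  { assert (d * d < a1 * a1) by lra. nra. }
  assert (Lq0 : 0 < Rabs (a1 + d)) by (rewrite Rabs_left; lra).
  assert (Lqp : Rabs (a1 + d) < Rabs (a1 - d)) by (rewrite !Rabs_left; lra).
  exists p, q. split; [exact Hpq | split].
  - intros x Hx. split.
    + intros Fx. rewrite (fix_iff _ _ _ Hs Hx) in Fx.
      pose proof Hx as Hx'. rewrite circle_iff in Hx'.
      destruct x as [x1 x2]. unfold Cmult, Cconj in Fx; simpl in Fx, Hx'.
      set (w1 := b1 * x1 - - b2 * x2).
      assert (Hw : w1 * w1 = d * d).
      { assert (E : w1 * w1 + a2 * a2 = nb * (x1 * x1 + x2 * x2)) by (rewrite <- Fx; unfold w1, nb; ring).
        rewrite Hx' in E. rewrite Hd2. unfold nb in E. lra. }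
      assert (Ex : (x1, x2) = mk w1 a2).
      { unfold mk. rewrite <- Fx. apply C_eq; simpl; field_simplify_eq; try lra; unfold w1, nb; ring. }
      assert (Hw' : (w1 - d) * (w1 + d) = 0) by lra.
      apply Rmult_integral in Hw'. destruct Hw' as [Hw'|Hw'].
      * right. unfold q. replace d with w1 by lra. exact Ex.
      * left. unfold p. replace (-d) with w1 by lra. exact Ex.
    + intros [-> | ->]; assumption.
  - split.
    + eapply (attr _ _ p q (a1 - d) (a1 + d)); eauto.
    + eapply (repel _ _ p q (a1 - d) (a1 + d)); eauto.
Qed.
Lemma is_derive_C_pair (f1 f2 : R -> R) (x d1 d2 : R) :
  is_derive f1 x d1 -> is_derive f2 x d2 ->
  @is_derive R_AbsRing C_R_NormedModule (fun t => (f1 t, f2 t) : C) x ((d1, d2) : C).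
Proof.
  intros H1 H2.
  unfold is_derive in *.
  pose proof (@filterdiff_comp'_2 R_AbsRing R_NormedModule R_NormedModule R_NormedModule
     (prod_NormedModule R_AbsRing R_NormedModule R_NormedModule)
     f1 f2 (fun a b => (a,b)) x _ _ (fun a b => (a,b)) H1 H2) as H.
  apply H. apply (filterdiff_ext_lin _ (fun y => y)).
  apply filterdiff_ext with (fun y => y). intros [a b]; reflexivity.
  apply filterdiff_id. intros [a b]; reflexivity.
Qed.

Lemma is_derive_C_fst (f : R -> C) (x : R) (d : C) :
  @is_derive R_AbsRing C_R_NormedModule f x d -> is_derive (fun t => fst (f t)) x (fst d).
Proof.
  intros H. unfold is_derive in *.
  pose proof (@filterdiff_comp' R_AbsRing R_NormedModule
     (prod_NormedModule R_AbsRing R_NormedModule R_NormedModule) R_NormedModule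
     f fst x _ _ H (filterdiff_linear _ is_linear_fst)) as H'.
  exact H'.
Qed.

Lemma is_derive_C_snd (f : R -> C) (x : R) (d : C) :
  @is_derive R_AbsRing C_R_NormedModule f x d -> is_derive (fun t => snd (f t)) x (snd d).
Proof.
  intros H. unfold is_derive in *.
  exact (@filterdiff_comp' R_AbsRing R_NormedModule
     (prod_NormedModule R_AbsRing R_NormedModule R_NormedModule) R_NormedModule
     f snd x _ _ H (filterdiff_linear _ is_linear_snd)).
Qed.
Lemma is_derive_R_quot (N1 N2 D1 D2 : R -> R) t n1 n2 d1 d2 :
  is_derive N1 t n1 -> is_derive N2 t n2 -> is_derive D1 t d1 -> is_derive D2 t d2 ->
  D1 t ^ 2 + D2 t ^ 2 <> 0 ->
  is_derive (fun t => (N1 t * D1 t + N2 t * D2 t) / (D1 t ^ 2 + D2 t ^ 2)) t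
   (((n1 * D1 t + N1 t * d1 + n2 * D2 t + N2 t * d2) * (D1 t ^ 2 + D2 t ^ 2)
     - (N1 t * D1 t + N2 t * D2 t) * (2 * D1 t * d1 + 2 * D2 t * d2)) / (D1 t ^ 2 + D2 t ^ 2)^2).
Proof.
  intros H1 H2 H3 H4 HQ.
  auto_derive.
  - repeat split; try (eexists; eassumption); auto.
  - replace (Derive (fun x => N1 x) t) with n1 by (symmetry; apply is_derive_unique; exact H1).
    replace (Derive (fun x => N2 x) t) with n2 by (symmetry; apply is_derive_unique; exact H2).
    replace (Derive (fun x => D1 x) t) with d1 by (symmetry; apply is_derive_unique; exact H3).
    replace (Derive (fun x => D2 x) t) with d2 by (symmetry; apply is_derive_unique; exact H4).
    field. auto.
Qed.

Lemma is_derive_val {V : NormedModule R_AbsRing} (f : R -> V) x l l' :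
  is_derive f x l -> l = l' -> is_derive f x l'.
Proof. intros H ->; exact H. Qed.

Lemma C_neq0_Q (z : C) : z <> RtoC 0 -> fst z ^ 2 + snd z ^ 2 <> 0.
Proof.
  intros H HQ. apply H. destruct z as [x y]; simpl in *.
  assert (x = 0) by nra. assert (y = 0) by nra. subst. reflexivity.
Qed.

Lemma is_derive_Cdiv (N D : R -> C) t n d :
  @is_derive R_AbsRing C_R_NormedModule N t n ->
  @is_derive R_AbsRing C_R_NormedModule D t d -> D t <> RtoC 0 ->
  @is_derive R_AbsRing C_R_NormedModule (fun t => Cdiv (N t) (D t)) t
     (Cdiv (Cminus (Cmult n (D t)) (Cmult (N t) d)) (Cmult (D t) (D t))).
Proof.
  intros HN HD HD0.
  pose proof (C_neq0_Q _ HD0) as HQ.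
  pose proof (is_derive_C_fst _ _ _ HN) as HN1.
  pose proof (is_derive_C_snd _ _ _ HN) as HN2.
  pose proof (is_derive_C_fst _ _ _ HD) as HD1.
  pose proof (is_derive_C_snd _ _ _ HD) as HD2.
  pose proof (is_derive_R_quot _ _ _ _ t _ _ _ _ HN1 HN2 HD1 HD2 HQ) as Q1.
  pose proof (is_derive_opp _ _ _ HN1) as HN1'.
  pose proof (is_derive_R_quot _ _ _ _ t _ _ _ _ HN2 HN1' HD1 HD2 HQ) as Q2.
  eapply is_derive_ext.
  2:{ eapply is_derive_val. apply (is_derive_C_pair _ _ _ _ _ Q1 Q2).
    unfold Cdiv, Cinv, Cminus, Cplus, Copp, Cmult; simpl. unfold opp; simpl. set (a := fst (D t)) in *; set (b := snd (D t)) in *.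
    assert (HQ2 : (a*a-b*b)*(a*a-b*b) + (a*b+b*a)*(a*b+b*a) <> 0).
    { replace ((a*a-b*b)*(a*a-b*b) + (a*b+b*a)*(a*b+b*a)) with ((a^2+b^2)^2) by ring.
      apply pow_nonzero; auto. }
    assert (HQ3 : a*a+b*b <> 0) by (replace (a*a+b*b) with (a^2+b^2) by ring; auto).
    f_equal; field; auto. }
  intros s. simpl. unfold Cdiv, Cinv, Cmult; simpl. unfold Rdiv, opp; simpl.
  f_equal; ring.
Qed.
Lemma d_cosh (r t : R) : is_derive (fun t => cosh (r * t)) t (r * sinh (r * t)).
Proof. unfold cosh, sinh. auto_derive; auto. field. Qed.
Lemma d_msinh (r m t : R) : m <> 0 -> is_derive (fun t => - (sinh (r * t) / m)) t (- (r * cosh (r * t) / m)).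
Proof. intros. unfold cosh, sinh. auto_derive; auto. field; auto. Qed.

Lemma is_derive_lin1 (f g : R -> R) t f' g' A B :
  is_derive f t f' -> is_derive g t g' ->
  is_derive (fun t => f t * A + g t * B) t (f' * A + g' * B).
Proof.
  intros Hf Hg. auto_derive.
  - repeat split; eexists; eauto.
  - replace (Derive (fun x => f x) t) with f' by (symmetry; apply is_derive_unique; auto).
    replace (Derive (fun x => g x) t) with g' by (symmetry; apply is_derive_unique; auto).
    ring.
Qed.

Lemma is_derive_lin2 (f g : R -> R) t f' g' (A B : C) :
  is_derive f t f' -> is_derive g t g' ->
  @is_derive R_AbsRing C_R_NormedModule
    (fun t => Cplus (Cmult (RtoC (f t)) A) (Cmult (RtoC (g t)) B)) t
    (Cplus (Cmult (RtoC f') A) (Cmult (RtoC g') B)).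
Proof.
  intros Hf Hg. destruct A as [A1 A2], B as [B1 B2].
  eapply is_derive_ext.
  2:{ eapply is_derive_val.
      apply (is_derive_C_pair (fun t => f t * A1 + g t * B1) (fun t => f t * A2 + g t * B2)
               t (f' * A1 + g' * B1) (f' * A2 + g' * B2)); apply is_derive_lin1; auto.
      unfold Cplus, Cmult, RtoC; simpl. f_equal; ring. }
  intros s; unfold Cplus, Cmult, RtoC; simpl. f_equal; ring.
Qed.

Definition rr l u := Cmod u / (2 * l).
Definition alf l u t : C := RtoC (cosh (rr l u * t)).
Definition bef l u t : C := Cmult (RtoC (- (sinh (rr l u * t) / Cmod u))) u.

Lemma cosh_sinh x : cosh x * cosh x - sinh x * sinh x = 1.
Proof.
  unfold cosh, sinh.
  replace (((exp x + exp (- x)) / 2) * ((exp x + exp (- x)) / 2) - ((exp x - exp (- x)) / 2) * ((exp x - exp (- x)) / 2))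
    with (exp x * exp (- x)) by field.
  rewrite <- exp_plus, Rplus_opp_r, exp_0. reflexivity.
Qed.

Lemma Cmod_sq2 u : Cmod u * Cmod u = fst u * fst u + snd u * snd u.
Proof. rewrite <- Cmod_sq. ring. Qed.

Lemma Cmod_nz u : u <> RtoC 0 -> Cmod u <> 0.
Proof. intros H E. apply H, Cmod_eq_0, E. Qed.

Lemma su_flow l u t : u <> RtoC 0 -> su (alf l u t) (bef l u t).
Proof.
  intros Hu. apply su_iff. pose proof (Cmod_nz u Hu) as Hm. pose proof (Cmod_sq2 u) as Hm2.
  pose proof (cosh_sinh (rr l u * t)) as Hcs.
  unfold alf, bef. set (m := Cmod u) in *. set (c := cosh (rr l u * t)) in *. set (s := sinh (rr l u * t)) in *.
  destruct u as [u1 u2]. unfold Cmult, RtoC; simpl in *.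
  unfold Rdiv. set (im := / m). assert (Him : m * im = 1) by (unfold im; field; auto). clearbody im.
  nsatz.
Qed.

Lemma key_ident2 (a1 a2 u1 u2 c s m il : R) :
  c * c - s * s = 1 -> m * m = u1 * u1 + u2 * u2 -> m <> 0 ->
  let r := m * il in
  let a : C := (a1, a2) in let u : C := (u1,u2) in
  let N := Cplus (Cmult (RtoC c) a) (Cmult (RtoC (-(s / m))) u) in
  let D := Cplus (Cmult (RtoC c) (RtoC 1)) (Cmult (RtoC (-(s / m))) (Cmult (Cconj u) a)) in
  let N' := Cplus (Cmult (RtoC (r * s)) a) (Cmult (RtoC (-(r * c / m))) u) in
  let D' := Cplus (Cmult (RtoC (r * s)) (RtoC 1)) (Cmult (RtoC (-(r * c / m))) (Cmult (Cconj u) a)) in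
  Cminus (Cmult N' D) (Cmult N D') = Cmult (RtoC il) (Cminus (Cmult (Cmult N N) (Cconj u)) (Cmult u (Cmult D D))).
Proof.
  intros Hcs Hm Hm0 r a u N D N' D'.
  unfold N, D, N', D', r, a, u, Cminus, Cplus, Cmult, Cconj, Copp, RtoC; simpl.
  unfold Rdiv. set (im := / m). assert (Him : m * im = 1) by (unfold im; field; auto).
  clearbody im.
  f_equal; nsatz.
Qed.

Lemma field_aux (il : R) (N D u : C) : D <> RtoC 0 ->
  Cdiv (Cmult (RtoC il) (Cminus (Cmult (Cmult N N) (Cconj u)) (Cmult u (Cmult D D)))) (Cmult D D)
  = Cmult (RtoC il) (Cminus (Cmult (Cmult (Cdiv N D) (Cdiv N D)) (Cconj u)) u).
Proof. intros H. field. exact H. Qed.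

Lemma flow_deriv l u a t : 0 < l -> u <> RtoC 0 -> on_circle a ->
  @is_derive R_AbsRing C_R_NormedModule (fun t => mobius (alf l u t) (bef l u t) a) t
    (prytz_field l u (mobius (alf l u t) (bef l u t) a)).
Proof.
  intros Hl Hu Ha.
  pose proof (Cmod_nz u Hu) as Hm.
  set (r := rr l u).
  set (m := Cmod u) in *.
  set (N := fun t => Cplus (Cmult (RtoC (cosh (r * t))) a) (Cmult (RtoC (- (sinh (r * t) / m))) u)).
  set (D := fun t => Cplus (Cmult (RtoC (cosh (r * t))) (RtoC 1)) (Cmult (RtoC (- (sinh (r * t) / m))) (Cmult (Cconj u) a))).
  assert (ED : forall t, D t = den (alf l u t) (bef l u t) a).
  { intros s. unfold D, den, alf, bef. fold r m. destruct u as [u1 u2], a as [a1 a2].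
    unfold Cplus, Cmult, Cconj, RtoC; simpl. apply C_eq; simpl; ring. }
  assert (EN : forall t, mobius (alf l u t) (bef l u t) a = Cdiv (N t) (D t)).
  { intros s. rewrite mobius_eq, <- ED. reflexivity. }
  apply (is_derive_ext (fun t => Cdiv (N t) (D t))). { intros s; rewrite EN; reflexivity. }
  rewrite EN.
  assert (HD : D t <> RtoC 0) by (rewrite ED; apply den_nz; auto; apply su_flow; auto).
  eapply is_derive_val.
  - apply is_derive_Cdiv; [ | | exact HD].
    + apply is_derive_lin2. apply d_cosh. apply d_msinh. exact Hm.
    + apply is_derive_lin2. apply d_cosh. apply d_msinh. exact Hm.
  - set (il := / (2 * l)).
    assert (Hr : r = m * il) by (unfold r, rr, m, il; unfold Rdiv; reflexivity).
    pose proof (Cmod_sq2 u) as Hm2. fold m in Hm2.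
    pose proof (cosh_sinh (r * t)) as Hcs.
    destruct a as [a1 a2], u as [u1 u2].
    pose proof (key_ident2 a1 a2 u1 u2 (cosh (r*t)) (sinh (r*t)) m il Hcs Hm2 Hm) as K.
    simpl in K. rewrite <- Hr in K. fold (N t) (D t) in K.
    rewrite K. unfold prytz_field. fold il. apply field_aux. exact HD.
Qed.

Lemma flow0 l u a : mobius (alf l u 0) (bef l u 0) a = a.
Proof.
  unfold alf, bef. rewrite Rmult_0_r, cosh_0, sinh_0. unfold Rdiv. rewrite Rmult_0_l, Ropp_0.
  destruct a as [a1 a2], u as [u1 u2].
  unfold mobius, Cdiv, Cinv, Cmult, Cplus, Cconj, RtoC; simpl.
  apply C_eq; simpl; field.
Qed.

Lemma seg_exists l u a : 0 < l -> u <> RtoC 0 -> on_circle a ->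
  prytz_segment l u a (mobius (alf l u 1) (bef l u 1) a).
Proof.
  intros Hl Hu Ha. exists (fun t => mobius (alf l u t) (bef l u t) a).
  split; [apply flow0 | split; [reflexivity |]].
  intros t. apply flow_deriv; auto.
Qed.

Lemma is_derive_sqdiff (A B Cf E : R -> R) t a' b' c' e' :
  is_derive A t a' -> is_derive B t b' -> is_derive Cf t c' -> is_derive E t e' ->
  is_derive (fun t => (A t - B t) * (A t - B t) + (Cf t - E t) * (Cf t - E t)) t
    (2 * ((A t - B t) * (a' - b') + (Cf t - E t) * (c' - e'))).
Proof.
  intros H1 H2 H3 H4. auto_derive.
  - repeat split; eexists; eauto.
  - replace (Derive (fun x => A x) t) with a' by (symmetry; apply is_derive_unique; auto).
    replace (Derive (fun x => B x) t) with b' by (symmetry; apply is_derive_unique; auto).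
    replace (Derive (fun x => Cf x) t) with c' by (symmetry; apply is_derive_unique; auto).
    replace (Derive (fun x => E x) t) with e' by (symmetry; apply is_derive_unique; auto).
    ring.
Qed.

Lemma is_derive_sq2 (A Cf : R -> R) t a' c' :
  is_derive A t a' -> is_derive Cf t c' ->
  is_derive (fun t => A t * A t + Cf t * Cf t) t (2 * (A t * a' + Cf t * c')).
Proof.
  intros H1 H3. auto_derive.
  - repeat split; eexists; eauto.
  - replace (Derive (fun x => A x) t) with a' by (symmetry; apply is_derive_unique; auto).
    replace (Derive (fun x => Cf x) t) with c' by (symmetry; apply is_derive_unique; auto).
    ring.
Qed.

Lemma is_derive_expw (G : R -> R) t g K :
  is_derive G t g -> is_derive (fun t => G t * exp (- K * t)) t (g * exp (- K * t) + G t * (- K * exp (- K * t))).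
Proof.
  intros H. auto_derive.
  - repeat split; eexists; eauto.
  - replace (Derive (fun x => G x) t) with g by (symmetry; apply is_derive_unique; auto). ring.
Qed.

Lemma deriv_cont (f : R -> R) t l : is_derive f t l -> continuity_pt f t.
Proof.
  intros H. apply derivable_continuous_pt. exists l. apply is_derive_Reals. exact H.
Qed.

Lemma seg_unique l u a b : 0 < l -> u <> RtoC 0 -> on_circle a -> prytz_segment l u a b ->
  b = mobius (alf l u 1) (bef l u 1) a.
Proof.
  intros Hl Hu Ha [z [Hz0 [Hz1 Hzd]]].
  set (y := fun t => mobius (alf l u t) (bef l u t) a).
  assert (Hyd : forall t, @is_derive R_AbsRing C_R_NormedModule y t (prytz_field l u (y t)))
    by (intros t; apply flow_deriv; auto).
  assert (Hy0 : y 0 = a) by apply flow0.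
  assert (Hyc : forall t, on_circle (y t)) by (intros t; apply mob_circle; auto; apply su_flow; auto).
  set (il := / (2 * l)).
  assert (Hil : 0 < il) by (unfold il; apply Rinv_0_lt_compat; lra).
  set (Dq := fun t => (fst (z t) - fst (y t)) * (fst (z t) - fst (y t)) + (snd (z t) - snd (y t)) * (snd (z t) - snd (y t))).
  set (kk := fun t => fst u * (fst (z t) + fst (y t)) + snd u * (snd (z t) + snd (y t))).
  assert (HDq : forall t, is_derive Dq t (2 * il * kk t * Dq t)).
  { intros t. unfold Dq at 1. eapply (@is_derive_val R_NormedModule).
    apply (is_derive_sqdiff (fun t => fst (z t)) (fun t => fst (y t)) (fun t => snd (z t)) (fun t => snd (y t))).
    apply (is_derive_C_fst _ _ _ (Hzd t)). apply (is_derive_C_fst _ _ _ (Hyd t)).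
    apply (is_derive_C_snd _ _ _ (Hzd t)). apply (is_derive_C_snd _ _ _ (Hyd t)).
    unfold Dq, kk, prytz_field. fold il. destruct (z t) as [z1 z2], (y t) as [y1 y2], u as [u1 u2].
    unfold Cmult, Cminus, Cplus, Copp, Cconj, RtoC; simpl. ring. }
  set (nz := fun t => fst (z t) * fst (z t) + snd (z t) * snd (z t)).
  assert (Hnzc : forall t, continuity_pt nz t).
  { intros t. apply (deriv_cont _ t (2 * (fst (z t) * fst (prytz_field l u (z t)) + snd (z t) * snd (prytz_field l u (z t))))).
    pose proof (is_derive_C_fst _ _ _ (Hzd t)) as H1. pose proof (is_derive_C_snd _ _ _ (Hzd t)) as H2.
    unfold nz. apply (is_derive_sq2 (fun t => fst (z t)) (fun t => snd (z t))); assumption. }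
  destruct (continuity_ab_maj nz 0 1 ltac:(lra) (fun c _ => Hnzc c)) as [Mx [HMx _]].
  set (Bd := nz Mx).
  set (K := il * (fst u * fst u + snd u * snd u + 2 * Bd + 2)).
  assert (HDq0 : forall t, 0 <= Dq t) by (intros t; unfold Dq; apply Rplus_le_le_0_compat; apply Rle_0_sqr).
  assert (Hle : forall t, 0 <= t <= 1 -> 2 * il * kk t * Dq t <= K * Dq t).
  { intros t Ht. specialize (HMx t Ht). fold Bd in HMx. specialize (HDq0 t).
    pose proof (Hyc t) as Hy. rewrite circle_iff in Hy.
    assert (Hk : 2 * kk t <= fst u * fst u + snd u * snd u + 2 * Bd + 2).
    { unfold kk. unfold nz in HMx.
      destruct (z t) as [z1 z2], (y t) as [y1 y2], u as [u1 u2]; simpl in *. pose proof (Rle_0_sqr (u1 - (z1+y1))). pose proof (Rle_0_sqr (u2 - (z2+y2))). pose proof (Rle_0_sqr (z1 - y1)). pose proof (Rle_0_sqr (z2 - y2)). unfold Rsqr in *. nra. }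
    unfold K. assert (0 <= il * Dq t) by (apply Rmult_le_pos; lra). nra. }
  set (F := fun t => Dq t * exp (- K * t)).
  set (dF := fun t => 2 * il * kk t * Dq t * exp (- K * t) + Dq t * (- K * exp (- K * t))).
  assert (HF : forall t, is_derive F t (dF t)) by (intros t; apply is_derive_expw, HDq).
  destruct (MVT_gen F 0 1 dF) as [c [Hc Ec]].
  { intros x _. apply HF. }
  { intros x _. apply (deriv_cont _ _ _ (HF x)). }
  rewrite Rmin_left in Hc by lra. rewrite Rmax_right in Hc by lra.
  assert (F0 : F 0 = 0).
  { unfold F, Dq. rewrite Hz0, Hy0. ring. }
  assert (dFc : dF c <= 0).
  { unfold dF. specialize (Hle c Hc). pose proof (exp_pos (- K * c)). nra. }
  assert (F1 : F 1 <= 0) by nra.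
  unfold F in F1. pose proof (exp_pos (- K * 1)). pose proof (HDq0 1).
  assert (D1 : Dq 1 = 0) by nra.
  unfold Dq in D1. rewrite Hz1 in D1.
  destruct (Rplus_sqr_eq_0 _ _ D1) as [E1 E2].
  unfold y in E1, E2. apply C_eq; lra.
Qed.

Definition HH (P Q : C * C) : C * C :=
  mm (fst Q, Copp (snd Q)) (mm (fst P, Copp (snd P)) (mm Q P)).

Lemma trace_lemma c1 c2 p1 p2 q1 q2 :
  c1 * c1 - (p1 * p1 + p2 * p2) = 1 -> c2 * c2 - (q1 * q1 + q2 * q2) = 1 ->
  Cplus (fst (HH (RtoC c1, (p1, p2)) (RtoC c2, (q1, q2)))) (Cconj (fst (HH (RtoC c1, (p1, p2)) (RtoC c2, (q1, q2)))))
  = RtoC (2 - 4 * ((p1 * q2 - p2 * q1) * (p1 * q2 - p2 * q1))).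
Proof.
  intros H1 H2.
  apply C_eq; cbn.
  - match goal with |- _ = ?R' =>
      transitivity (R' + 2*((c2*c2 - (q1*q1+q2*q2) - 1) + (c1*c1 - (p1*p1+p2*p2) - 1)*(c2*c2 - (q1*q1+q2*q2)))); [ring |] end.
    replace (c2*c2 - (q1*q1+q2*q2) - 1) with 0 by lra.
    replace (c1*c1 - (p1*p1+p2*p2) - 1) with 0 by lra. ring.
  - ring.
Qed.

Definition Mu l u : C * C := (alf l u 1, bef l u 1).

Lemma Mu_opp l u : Mu l (Copp u) = (fst (Mu l u), Copp (snd (Mu l u))).
Proof.
  unfold Mu, alf, bef, rr. simpl. rewrite Cmod_opp. f_equal. ring.
Qed.

Lemma suM_Mu l u : u <> RtoC 0 -> suM (Mu l u).
Proof. intros Hu. apply su_flow. exact Hu. Qed.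

Lemma suM_opp P : suM P -> suM (fst P, Copp (snd P)).
Proof. unfold suM, su. simpl. rewrite Cmod_opp. auto. Qed.

Lemma seg_iff l u a b : 0 < l -> u <> RtoC 0 -> on_circle a ->
  (prytz_segment l u a b <-> b = mobM (Mu l u) a).
Proof.
  intros Hl Hu Ha. split.
  - intros H. apply (seg_unique l u a b Hl Hu Ha H).
  - intros ->. apply seg_exists; auto.
Qed.

Lemma Copp_nz u : u <> RtoC 0 -> Copp u <> RtoC 0.
Proof. intros H E. apply H. replace u with (Copp (Copp u)) by ring. rewrite E. ring. Qed.

Lemma hol_iff l v w z0 z4 : 0 < l -> v <> RtoC 0 -> w <> RtoC 0 -> on_circle z0 ->
  (prytz_holonomy l v w z0 z4 <-> z4 = mobM (HH (Mu l v) (Mu l w)) z0).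
Proof.
  intros Hl Hv Hw H0.
  pose proof (suM_Mu l v Hv) as Sv. pose proof (suM_Mu l w Hw) as Sw.
  pose proof (suM_opp _ Sv) as Sv'. pose proof (suM_opp _ Sw) as Sw'.
  pose proof (Copp_nz v Hv) as Hv'. pose proof (Copp_nz w Hw) as Hw'.
  assert (E : forall z, on_circle z -> mobM (HH (Mu l v) (Mu l w)) z =
     mobM (Mu l (Copp w)) (mobM (Mu l (Copp v)) (mobM (Mu l w) (mobM (Mu l v) z)))).
  { intros z Hz. unfold HH. rewrite !Mu_opp.
    rewrite (mob_comp (Mu l w) (Mu l v)) by auto.
    rewrite (mob_comp (fst (Mu l v), Copp (snd (Mu l v))) (mm (Mu l w) (Mu l v))) by (auto; apply su_mm; auto).
    rewrite (mob_comp (fst (Mu l w), Copp (snd (Mu l w)))); auto.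
    apply su_mm; auto. apply su_mm; auto. }
  assert (C1 : forall M z, suM M -> on_circle z -> on_circle (mobM M z)) by (intros; apply mob_circle; auto).
  pose proof (suM_Mu l _ Hv') as Sv2. pose proof (suM_Mu l _ Hw') as Sw2.
  split.
  - intros [z1 [z2 [z3 [S1 [S2 [S3 S4]]]]]].
    apply seg_iff in S1; auto. subst z1.
    apply seg_iff in S2; auto. subst z2.
    apply seg_iff in S3; auto. subst z3.
    apply seg_iff in S4; auto. subst z4.
    rewrite E; auto.
  - intros ->. rewrite E; auto.
    exists (mobM (Mu l v) z0), (mobM (Mu l w) (mobM (Mu l v) z0)),
      (mobM (Mu l (Copp v)) (mobM (Mu l w) (mobM (Mu l v) z0))).
    repeat split; apply seg_iff; auto.
Qed.

Theorem mainTheorem6 (l : R) (v w : C) (theta : R) :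
  0 < l -> v <> RtoC 0 -> w <> RtoC 0 ->
  0 < theta < PI ->
  Cmult (RtoC (Cmod v)) w = Cmult (Cmult (RtoC (Cmod w)) (cos theta, sin theta)) v ->
  let s := sinh (Cmod v / (2 * l)) * sinh (Cmod w / (2 * l)) * sin theta in
  exists alpha beta : C,
    Cmod alpha ^ 2 - Cmod beta ^ 2 = 1 /\
    Cplus alpha (Cconj alpha) = RtoC (2 - 4 * s ^ 2) /\
    (forall z0 z4 : C, on_circle z0 ->
       (prytz_holonomy l v w z0 z4 <-> z4 = mobius alpha beta z0)) /\
    (1 < s ->
       exists p q : C, p <> q /\
         (forall x : C, on_circle x ->
            (prytz_holonomy l v w x x <-> x = p \/ x = q)) /\
         attracting_on_circle (mobius alpha beta) p /\
         repelling_on_circle (mobius alpha beta) q) /\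
    (s < 1 -> forall x : C, on_circle x -> ~ prytz_holonomy l v w x x).
Proof.
  intros Hl Hv Hw Hth Hang s.
  set (HM := HH (Mu l v) (Mu l w)).
  pose proof (suM_Mu l v Hv) as Sv. pose proof (suM_Mu l w Hw) as Sw.
  assert (SH : suM HM).
  { unfold HM, HH. apply su_mm. apply suM_opp; auto. apply su_mm. apply suM_opp; auto. apply su_mm; auto. }
  assert (Tr : Cplus (fst HM) (Cconj (fst HM)) = RtoC (2 - 4 * s ^ 2)).
  { pose proof (Cmod_nz v Hv) as Hm1. pose proof (Cmod_nz w Hw) as Hm2.
    pose proof (Cmod_sq2 v) as Hv2. pose proof (Cmod_sq2 w) as Hw2.
    pose proof Sv as Sv1. pose proof Sw as Sw1. unfold suM in Sv1, Sw1. rewrite su_iff in Sv1, Sw1.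
    unfold HM. unfold Mu in *. unfold alf in *. cbn [fst snd] in Sv1, Sw1.
    destruct (bef l v 1) as [p1 p2] eqn:Ep. destruct (bef l w 1) as [q1 q2] eqn:Eq.
    cbn [fst snd] in Sv1, Sw1. unfold RtoC in Sv1, Sw1. cbn [fst snd] in Sv1, Sw1.
    rewrite trace_lemma by lra.
    f_equal.
    unfold bef, rr in Ep, Eq. rewrite Rmult_1_r in Ep, Eq.
    unfold s. set (m1 := Cmod v) in *. set (m2 := Cmod w) in *.
    set (s1 := sinh (m1 / (2 * l))) in *. set (s2 := sinh (m2 / (2 * l))) in *.
    destruct v as [v1 v2], w as [w1 w2]. cbn [fst snd] in Hv2, Hw2.
    unfold Cmult, RtoC in Ep, Eq. cbn [fst snd] in Ep, Eq.
    injection Ep as P1 P2. injection Eq as Q1 Q2.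
    unfold Cmult, RtoC in Hang. cbn [fst snd] in Hang. injection Hang as A1 A2.
    set (ct := cos theta) in *. set (st := sin theta) in *.
    assert (Hx : m1 * (v1 * w2 - v2 * w1) = m1 * (m1 * m2 * st)).
    { transitivity (v1 * (m1 * w2 + 0 * w1) - v2 * (m1 * w1 - 0 * w2)); [ring|].
      rewrite A1, A2. transitivity (m2 * st * (v1 * v1 + v2 * v2)); [ring |]. rewrite <- Hv2. ring. }
    apply Rmult_eq_reg_l in Hx; [| exact Hm1].
    assert (Hp : p1 * q2 - p2 * q1 = s1 * s2 * st).
    { rewrite <- P1, <- P2, <- Q1, <- Q2.
      transitivity (s1 * s2 * (v1 * w2 - v2 * w1) / (m1 * m2)); [field; auto |].
      rewrite Hx. field. auto. }
    rewrite Hp. ring. }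
  assert (Re : fst (fst HM) = 1 - 2 * s ^ 2).
  { apply (f_equal fst) in Tr. unfold Cplus, Cconj, RtoC in Tr. cbn [fst snd] in Tr. lra. }
  exists (fst HM), (snd HM).
  split; [exact SH |]. split; [exact Tr |].
  assert (Hol : forall z0 z4, on_circle z0 -> (prytz_holonomy l v w z0 z4 <-> z4 = mobius (fst HM) (snd HM) z0)).
  { intros z0 z4 Hz. apply hol_iff; auto. }
  split; [exact Hol |]. split.
  - intros Hs.
    assert (Ha : fst (fst HM) < -1).
    { rewrite Re. assert (1 < s ^ 2) by (simpl; nra). lra. }
    destruct (hyper _ _ SH Ha) as [p [q [Hpq [Hfix [Hat Hrep]]]]].
    exists p, q. split; [exact Hpq | split; [| split; assumption]].
    intros x Hx. rewrite Hol by exact Hx. rewrite <- Hfix by exact Hx.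
    split; intro E; symmetry; exact E.
  - intros Hs x Hx Hh.
    rewrite Hol in Hh by exact Hx.
    assert (Hpos : 0 < s).
    { unfold s. apply Rmult_lt_0_compat; [apply Rmult_lt_0_compat|].
      - rewrite <- sinh_0. apply sinh_lt. apply Rdiv_lt_0_compat; [apply Cmod_gt_0; exact Hv | lra].
      - rewrite <- sinh_0. apply sinh_lt. apply Rdiv_lt_0_compat; [apply Cmod_gt_0; exact Hw | lra].
      - apply sin_gt_0; lra. }
    assert (Ha : fst (fst HM) * fst (fst HM) < 1).
    { rewrite Re. simpl. assert (0 < s * s) by nra. assert (s * s < 1) by nra. nra. }
    apply (no_fix _ _ x SH Ha Hx). symmetry. exact Hh.
Qed.
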